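(* Let $(S,\mathfrak{n})$ be a Noetherian local ring, $x_1,\dots,x_r\in S$, and $\Gamma$ a set of monomials in $P=k[T_1,\dots,T_r]$. Let $i_1<i_2$ be positive integers and let $i_3$ be either an integer with $i_3>i_2$ or $i_3=\infty$ (in which case $S$ is assumed complete). Consider: (1) $x_1,\dots,x_r$ is $\Gamma$-expandable from degree $i_1$ to $i_2$; (2) $x_1,\dots,x_r$ is $\Gamma$-expandable from degree $i_1$ to $i_3$; (3) $x_1,\dots,x_r$ is $\Gamma$-expandable from degree $i_2$ to $i_3$. Then any two of (1), (2), (3) imply the third.
   Context: Let $I=(x_1,\dots,x_r)$ and set $I^\infty=0$. For $u=T_1^{a_1}\cdots T_r^{a_r}$ let $u(x)=x_1^{a_1}\cdots x_r^{a_r}$; $\Gamma_k$ is the set of monomials of degree $k$ in $\Gamma$. A lifting is a map $\sigma:S/I\to S$ with $\sigma(0)=0$ and $\pi\circ\sigma=\mathrm{id}_{S/I}$, $\pi:S\to S/I$ the projection. For $0\le i<j<\infty$, $x_1,\dots,x_r$ is $\Gamma$-expandable from degree $i$ to $j$ if for every lifting $\sigma$, every $f\in I^i$ has a unique representation $f\equiv\sum_{u\in\Gamma_k,\,i\le k\le j-1}f_uu(x)\pmod{I^j}$ with all $f_u\in\sigma(S/I)$ (uniqueness of the family $(f_u)$). If $S$ is complete, $x_1,\dots,x_r$ is $\Gamma$-expandable from degree $i$ to $\infty$ if for every lifting $\sigma$ every $f\in I^i$ has a unique representation $f=\sum_{u\in\Gamma_k,\,k\ge i}f_uu(x)$ (convergent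 sum) with all $f_u\in\sigma(S/I)$. *)

(* Defs.v *)
From HB Require Import structures.
From mathcomp Require Import all_boot all_order all_algebra.
From mathcomp Require Import mpoly.
Set Implicit Arguments. Unset Strict Implicit. Unset Printing Implicit Defensive.
Import GRing.Theory.
Local Open Scope ring_scope.

Section Defs.
Variable S : comUnitRingType.

Definition is_ideal (J : S -> Prop) : Prop :=
  [/\ J 0, (forall a b, J a -> J b -> J (a + b)) & (forall c a, J a -> J (c * a))].

Definition ideal_gen (g : seq S) (f : S) : Prop :=
  exists c : seq S, size c = size g /\ f = \sum_(k < size g) c`_k * g`_k.

Definition ideal_pow (J : S -> Prop) (k : nat) (f : S) : Prop :=
  exists (c : seq S) (p : seq (seq S)),
    size c = size p /\
    (forall l, (l < size p)%N -> size (nth [::] p l) = k /\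
                forall a, a \in nth [::] p l -> J a) /\
    f = \sum_(l < size p) c`_l * \prod_(a <- nth [::] p l) a.

Definition noetherian : Prop :=
  forall J : S -> Prop, is_ideal J ->
    exists g : seq S, forall a, J a <-> ideal_gen g a.

(* Local: the non-units form an ideal (equivalently, there is a unique maximal
   ideal, namely the set of non-units). *)
Definition local_ring : Prop :=
  forall a b : S, a \isn't a GRing.unit -> b \isn't a GRing.unit ->
    (a + b) \isn't a GRing.unit.

Definition maxideal (a : S) : Prop := a \isn't a GRing.unit.

Definition nadic_lim (s : nat -> S) (l : S) : Prop :=
  forall k, exists N, forall m, (N <= m)%N -> ideal_pow maxideal k (s m - l).

Definition nadic_cauchy (s : nat -> S) : Prop :=
  forall k, exists N, forall m, (N <= m)%N -> ideal_pow maxideal k (s m - s N).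

Definition complete : Prop :=
  (forall a, (forall k, ideal_pow maxideal k a) -> a = 0) /\
  (forall s, nadic_cauchy s -> exists l, nadic_lim s l).

Variable r : nat.
Variable x : 'I_r -> S.

Definition Ix : S -> Prop := ideal_gen [seq x i | i <- enum 'I_r].

Definition mono_eval (u : 'X_{1..r}) : S := \prod_(i < r) x i ^+ u i.

(* A lifting sigma : S/I -> S is encoded by its composite with the projection,
   sigma o pi : S -> S, i.e. a map constant on cosets of I, with
   pi (sigma a) = pi a and sigma 0 = 0.  Its image is sigma(S/I). *)
Definition lifting (sigma : S -> S) : Prop :=
  [/\ sigma 0 = 0,
      (forall a, Ix (sigma a - a)) &
      (forall a b, Ix (a - b) -> sigma a = sigma b)].

Definition in_image (sigma : S -> S) (a : S) : Prop := exists b, a = sigma b.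

Variable Gamma : 'X_{1..r} -> bool.

Definition trunc_sum (c : 'X_{1..r} -> S) (i j : nat) : S :=
  \sum_(u : 'X_{1..r < j} | Gamma u && (i <= mdeg u)%N) c u * mono_eval u.

Definition expandable_fin (i j : nat) : Prop :=
  forall sigma, lifting sigma ->
  forall f, ideal_pow Ix i f ->
    (exists c : 'X_{1..r} -> S,
       (forall u : 'X_{1..r}, Gamma u -> (i <= mdeg u < j)%N -> in_image sigma (c u)) /\
       ideal_pow Ix j (f - trunc_sum c i j)) /\
    (forall c c' : 'X_{1..r} -> S,
       (forall u : 'X_{1..r}, Gamma u -> (i <= mdeg u < j)%N -> in_image sigma (c u)) ->
       ideal_pow Ix j (f - trunc_sum c i j) ->
       (forall u : 'X_{1..r}, Gamma u -> (i <= mdeg u < j)%N -> in_image sigma (c' u)) ->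
       ideal_pow Ix j (f - trunc_sum c' i j) ->
       forall u : 'X_{1..r}, Gamma u -> (i <= mdeg u < j)%N -> c u = c' u).

(* Gamma-expandable from degree i to infinity (S complete): the convergent sum
   sum_{u in Gamma, deg u >= i} c_u u(x) is the n-adic limit of its partial sums
   over degrees i <= deg u < N. *)
Definition expandable_inf (i : nat) : Prop :=
  forall sigma, lifting sigma ->
  forall f, ideal_pow Ix i f ->
    (exists c : 'X_{1..r} -> S,
       (forall u : 'X_{1..r}, Gamma u -> (i <= mdeg u)%N -> in_image sigma (c u)) /\
       nadic_lim (fun N => trunc_sum c i N) f) /\
    (forall c c' : 'X_{1..r} -> S,
       (forall u : 'X_{1..r}, Gamma u -> (i <= mdeg u)%N -> in_image sigma (c u)) ->
       nadic_lim (fun N => trunc_sum c i N) f ->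
       (forall u : 'X_{1..r}, Gamma u -> (i <= mdeg u)%N -> in_image sigma (c' u)) ->
       nadic_lim (fun N => trunc_sum c' i N) f ->
       forall u : 'X_{1..r}, Gamma u -> (i <= mdeg u)%N -> c u = c' u).

(* Target degree j : option nat, with None standing for infinity. *)
Definition expandable (i : nat) (j : option nat) : Prop :=
  match j with Some j' => expandable_fin i j' | None => expandable_inf i end.

End Defs.

(* Main.v *)
Require Import Defs.
From mathcomp Require Import all_boot all_order all_algebra.
From mathcomp Require Import mpoly.
From mathcomp Require Import zify ring.
From Stdlib Require Import Classical.
Set Implicit Arguments. Unset Strict Implicit. Unset Printing Implicit Defensive.
Local Open Scope ring_scope.
Import GRing.Theory.

Section IP.
Variable S : comUnitRingType.
Implicit Types (J : S -> Prop).

Definition ipl J k (f : S) : Prop :=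
  exists s : seq (S * seq S),
    (forall q, q \in s -> size q.2 = k /\ forall a, a \in q.2 -> J a) /\
    f = \sum_(q <- s) q.1 * \prod_(a <- q.2) a.

Lemma ipl_ip J k f : ideal_pow J k f <-> ipl J k f.
Proof.
split.
  case=> c [p [Hs [Hp ->]]]; exists (zip c p); split.
    move=> q /(nthP (0, [::])) [l]; rewrite size_zip Hs minnn => lt <-.
    by rewrite nth_zip //=; apply: Hp.
  rewrite (big_nth (0, [::])) size_zip Hs minnn big_mkord.
  by apply: eq_bigr => l _; rewrite nth_zip.
case=> s [Hs ->]; exists (map fst s), (map snd s); rewrite !size_map; split=> //.
split.
  move=> l lt; rewrite (nth_map (0, [::])) //; apply: Hs; exact: mem_nth.
rewrite (big_nth (0, [::])) big_mkord; apply: eq_bigr => l _.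
by rewrite (nth_map (0, [::])) // (nth_map (0, [::])).
Qed.

Lemma ip0 J k : ideal_pow J k 0.
Proof. by apply/ipl_ip; exists [::]; rewrite big_nil. Qed.

Lemma ipD J k a b : ideal_pow J k a -> ideal_pow J k b -> ideal_pow J k (a + b).
Proof.
move=> /ipl_ip [s [Hs ->]] /ipl_ip [t [Ht ->]]; apply/ipl_ip; exists (s ++ t).
split; last by rewrite big_cat.
by move=> q; rewrite mem_cat => /orP [/Hs|/Ht].
Qed.

Lemma ipM J k c a : ideal_pow J k a -> ideal_pow J k (c * a).
Proof.
move=> /ipl_ip [s [Hs ->]]; apply/ipl_ip.
exists [seq (c * q.1, q.2) | q <- s]; split.
  by move=> q /mapP [q' /Hs H ->].
rewrite big_map mulr_sumr; apply: eq_bigr => q _ /=; by rewrite mulrA.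
Qed.

Lemma ipN J k a : ideal_pow J k a -> ideal_pow J k (- a).
Proof. by move=> H; rewrite -mulN1r; apply: ipM. Qed.

Lemma ipB J k a b : ideal_pow J k a -> ideal_pow J k b -> ideal_pow J k (a - b).
Proof. by move=> Ha Hb; apply: ipD => //; apply: ipN. Qed.

Lemma ip_sum J k (I : Type) (s : seq I) (P : pred I) (F : I -> S) :
  (forall i, P i -> ideal_pow J k (F i)) -> ideal_pow J k (\sum_(i <- s | P i) F i).
Proof.
move=> H; elim: s => [|i s IH]; first by rewrite big_nil; apply: ip0.
rewrite big_cons; case: ifP => Pi //; apply: ipD => //; exact: H.
Qed.

Lemma ip_le J j k a : (j <= k)%N -> ideal_pow J k a -> ideal_pow J j a.
Proof.
move=> le /ipl_ip [s [Hs ->]]; apply/ipl_ip.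
exists [seq (q.1 * \prod_(b <- drop j q.2) b, take j q.2) | q <- s]; split.
  move=> q /mapP [q' /Hs [H1 H2] ->] /=; split.
    by rewrite size_take H1; case: ltngtP le => // ->.
  by move=> b /mem_take /H2.
rewrite big_map; apply: eq_bigr => q _ /=.
by rewrite -mulrA; congr (_ * _); rewrite mulrC -big_cat cat_take_drop.
Qed.

Lemma ip_mono J J' k a : (forall b, J b -> J' b) -> ideal_pow J k a -> ideal_pow J' k a.
Proof.
move=> HJ /ipl_ip [s [Hs ->]]; apply/ipl_ip; exists s; split => //.
by move=> q /Hs [H1 H2]; split => // b /H2 /HJ.
Qed.

Lemma ip_prod J (s : seq S) : (forall a, a \in s -> J a) ->
  ideal_pow J (size s) (\prod_(a <- s) a).
Proof.
move=> H; apply/ipl_ip; exists [:: (1, s)]; split.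
  by move=> q; rewrite inE => /eqP -> /=.
by rewrite big_seq1 mul1r.
Qed.

Lemma ip_all J k a : J 1 -> ideal_pow J k a.
Proof.
move=> H1; rewrite -[a]mulr1; apply: ipM.
have -> : (1 : S) = \prod_(b <- nseq k 1) b.
  by rewrite big_nseq; elim: k => //= k <-; rewrite mulr1.
have := @ip_prod J (nseq k 1); rewrite size_nseq; apply.
by move=> b /nseqP [-> _].
Qed.

End IP.

Section Lim.
Variable S : comUnitRingType.

Lemma lim_eqfun (s t : nat -> S) l : (forall N, s N = t N) -> nadic_lim t l -> nadic_lim s l.
Proof. by move=> E H k; have [N HN] := H k; exists N => m le; rewrite E; apply: HN. Qed.

Lemma lim_ext (s t : nat -> S) a b N0 : (forall m, (N0 <= m)%N -> s m - a = t m - b) ->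
  nadic_lim t b -> nadic_lim s a.
Proof.
move=> E H k; have [N HN] := H k; exists (maxn N N0) => m le.
rewrite E; last by apply: leq_trans le; apply: leq_maxr.
by apply: HN; apply: leq_trans le; apply: leq_maxl.
Qed.

Lemma lim_add (s t : nat -> S) a b : nadic_lim s a -> nadic_lim t b ->
  nadic_lim (fun N => s N + t N) (a + b).
Proof.
move=> Hs Ht k; have [N1 H1] := Hs k; have [N2 H2] := Ht k; exists (maxn N1 N2) => m le.
rewrite opprD addrACA; apply: ipD.
  by apply: H1; apply: leq_trans le; apply: leq_maxl.
by apply: H2; apply: leq_trans le; apply: leq_maxr.
Qed.

Lemma lim_scale (s : nat -> S) a c : nadic_lim s a -> nadic_lim (fun N => c * s N) (c * a).
Proof. by move=> Hs k; have [N H] := Hs k; exists N => m le; rewrite -mulrBr; apply: ipM; apply: H. Qed.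

Lemma lim_unique (s : nat -> S) a b :
  (forall a, (forall k, ideal_pow (@maxideal S) k a) -> a = 0) ->
  nadic_lim s a -> nadic_lim s b -> a = b.
Proof.
move=> Hsep Ha Hb; apply/eqP; rewrite -subr_eq0; apply/eqP; apply: Hsep => k.
have [N1 H1] := Ha k; have [N2 H2] := Hb k.
have -> : a - b = (s (maxn N1 N2) - b) - (s (maxn N1 N2) - a).
  by ring.
by apply: ipB; [apply: H2; apply: leq_maxr | apply: H1; apply: leq_maxl].
Qed.

End Lim.

Section Trunc.
Variable S : comUnitRingType.
Variable r : nat.
Variable x : 'I_r -> S.
Variable Gamma : 'X_{1..r} -> bool.

Lemma bsum_widen (P : pred 'X_{1..r}) (F : 'X_{1..r} -> S) N M : (N <= M)%N ->
  \sum_(u : 'X_{1..r < N} | P u) F u = \sum_(u : 'X_{1..r < M} | P u && (mdeg u < N)%N) F u.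
Proof.
move=> le.
rewrite -(big_map (@bmnm r N) P F).
rewrite -(big_map (@bmnm r M) (fun m => P m && (mdeg m < N)%N) F).
rewrite [in RHS](eq_bigl (fun m => (mdeg m < N)%N && P m)); last by move=> m; rewrite andbC.
rewrite -big_filter_cond; apply: perm_big; apply: uniq_perm.
- by rewrite map_inj_uniq ?index_enum_uniq //; apply: val_inj.
- by rewrite filter_uniq // map_inj_uniq ?index_enum_uniq //; apply: val_inj.
move=> m; rewrite mem_filter; apply/mapP/andP.
  case=> w _ ->; split; first exact: bmdeg.
  apply/mapP; exists (BMultinom (leq_trans (bmdeg w) le)) => //; exact: mem_index_enum.
case=> lt _; exists (BMultinom lt) => //; exact: mem_index_enum.
Qed.

Lemma bsum_split (P : pred 'X_{1..r}) (F : 'X_{1..r} -> S) N M : (N <= M)%N ->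
  \sum_(u : 'X_{1..r < M} | P u) F u =
  \sum_(u : 'X_{1..r < N} | P u) F u + \sum_(u : 'X_{1..r < M} | P u && (N <= mdeg u)%N) F u.
Proof.
move=> le; rewrite (bigID (fun u : 'X_{1..r < M} => (mdeg u < N)%N)) /= (bsum_widen _ _ le).
congr (_ + _); apply: eq_bigl => u; by rewrite -leqNgt.
Qed.

Lemma trunc_split c a b N : (a <= b)%N -> (b <= N)%N ->
  trunc_sum x Gamma c a N = trunc_sum x Gamma c a b + trunc_sum x Gamma c b N.
Proof.
move=> le1 le2; rewrite /trunc_sum (bsum_split (fun u => Gamma u && (a <= mdeg u)%N) (fun u => c u * mono_eval x u) le2).
rewrite (bsum_widen (fun u => Gamma u && (a <= mdeg u)%N) (fun u => c u * mono_eval x u) (leqnn b)); congr (_ + _).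
apply: eq_bigl => u; case: (Gamma u) => //=.
case: (leqP b (mdeg u)) => h; rewrite ?andbT ?andbF //; by rewrite (leq_trans le1 h).
Qed.

Lemma trunc_eq c c' a N :
  (forall u : 'X_{1..r}, Gamma u -> (a <= mdeg u)%N -> (mdeg u < N)%N -> c u = c' u) ->
  trunc_sum x Gamma c a N = trunc_sum x Gamma c' a N.
Proof.
move=> H; apply: eq_bigr => u /andP [G le]; by rewrite H // bmdeg.
Qed.

Lemma trunc_zero c a N :
  (forall u : 'X_{1..r}, Gamma u -> (a <= mdeg u)%N -> (mdeg u < N)%N -> c u = 0) ->
  trunc_sum x Gamma c a N = 0.
Proof.
move=> H; apply: big1 => u /andP [G le]; by rewrite H ?mul0r // bmdeg.
Qed.

Lemma trunc_empty c a N : (N <= a)%N -> trunc_sum x Gamma c a N = 0.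
Proof.
move=> le; apply: trunc_zero => u _ h1 h2; exfalso; lia.
Qed.

Lemma Ix_nth (g : seq S) k : (k < size g)%N -> ideal_gen g g`_k.
Proof.
move=> lt; exists (mkseq (fun j => (j == k)%:R) (size g)); rewrite size_mkseq; split=> //.
rewrite (bigD1 (Ordinal lt)) //= nth_mkseq // eqxx mul1r big1 ?addr0 // => j ne.
rewrite nth_mkseq // (_ : (j == k :> nat) = false) ?mul0r //; apply/negbTE; move: ne; apply: contra => /eqP e.
by apply/eqP/val_inj.
Qed.

Lemma Ix_x i : Ix x (x i).
Proof.
have lt : (i < size [seq x i | i <- enum 'I_r])%N by rewrite size_map size_enum_ord.
have := Ix_nth lt; by rewrite (nth_map i) ?nth_ord_enum // size_enum_ord.
Qed.

Lemma Ix_M c a : Ix x a -> Ix x (c * a).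
Proof.
case=> s [Hs ->]; exists [seq c * z | z <- s]; split; first by rewrite (size_map (fun z => c * z)) Hs.
rewrite mulr_sumr; apply: eq_bigr => k _; rewrite (nth_map 0) ?mulrA // Hs.
exact: ltn_ord.
Qed.

Lemma mono_eval_prod u : mono_eval x u = \prod_(a <- [seq x i | i <- m2s u]) a.
Proof.
rewrite big_map /m2s big_flatten big_map /mono_eval big_enum /=.
apply: eq_bigr => i _; rewrite big_nseq; elim: (u i) => //= n <-; by rewrite exprS.
Qed.

Lemma ip_mono_eval u : ideal_pow (Ix x) (mdeg u) (mono_eval x u).
Proof.
rewrite mono_eval_prod -size_m2s -(size_map x); apply: ip_prod.
by move=> a /mapP [i _ ->]; apply: Ix_x.
Qed.

Lemma ip_trunc c a N : ideal_pow (Ix x) a (trunc_sum x Gamma c a N).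
Proof.
apply: ip_sum => u /andP [_ le]; apply: ipM; apply: ip_le le _; apply: ip_mono_eval.
Qed.


Lemma lem_ex d (u : 'X_{1..r}) : (d <= mdeg u)%N ->
  exists v : 'X_{1..r}, mdeg v = d /\ lem v u.
Proof.
elim: d => [|d IH] le.
  exists 0%MM; split; first exact: mdeg0.
  by apply/mnm_lepP => i; rewrite mnm0E.
have [v [Hv Hvu]] := IH (ltnW le).
case: (pickP (fun i => v i < u i)%N) => [i Hi|Hn].
  exists (v + U_(i))%MM; split; first by rewrite mdegD mdeg1 Hv addn1.
  apply/mnm_lepP => j; rewrite mnmDE mnm1E.
  case: eqP => [<-|_]; first by rewrite addn1.
  by rewrite addn0; apply: (mnm_lepP Hvu).
exfalso.
have : (mdeg u <= mdeg v)%N.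
  rewrite !mdegE; apply: leq_sum => i _; by rewrite leqNgt Hn.
by rewrite Hv; move: le; case: leqP.
Qed.

Lemma mono_evalD (a b : 'X_{1..r}) : mono_eval x (a + b)%MM = mono_eval x a * mono_eval x b.
Proof.
by rewrite /mono_eval -big_split /=; apply: eq_bigr => i _; rewrite mnmDE exprD.
Qed.

Lemma mdeg_sub (u v : 'X_{1..r}) : lem v u -> mdeg (u - v)%MM = (mdeg u - mdeg v)%N.
Proof.
move=> H; have := congr1 mdeg (submK H); rewrite mdegD => <-; by rewrite addnK.
Qed.

Lemma trunc_closed c d g : complete S ->
  nadic_lim (fun N => trunc_sum x Gamma c d N) g -> ideal_pow (Ix x) d g.
Proof.
move=> [Hsep Hcom] Hlim.
case: (classic (Ix x 1)) => [H1|H1]; first exact: ip_all.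
have Hn : forall a, Ix x a -> maxideal a.
  move=> a Ha; apply/negP => Ua; apply: H1; rewrite -(mulVr Ua); exact: Ix_M.
have HIP : forall k a, ideal_pow (Ix x) k a -> ideal_pow (@maxideal S) k a.
  by move=> k a; apply: ip_mono.
pose Q (u : 'X_{1..r}) := Gamma u && (d <= mdeg u)%N.
pose pk (u : 'X_{1..r}) := [pick v : 'X_{1..r < d.+1} | (mdeg v == d) && lem v u].
have pkS : forall u, Q u -> exists w, pk u = Some w.
  move=> u /andP [_ le]; rewrite /pk; case: pickP => [w _|Hn0]; first by exists w.
  have [v [Hv Hvu]] := lem_ex le.
  have lt : (mdeg v < d.+1)%N by rewrite Hv.
  by move: (Hn0 (BMultinom lt)); rewrite /= Hv eqxx Hvu.
have pkP : forall u w, pk u = Some w -> mdeg w = d /\ lem w u.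
  move=> u w; rewrite /pk; case: pickP => // w' /andP [/eqP H1' H2] [<-]; by [].
pose t (v : 'X_{1..r < d.+1}) N :=
  \sum_(u : 'X_{1..r < N} | Q u && (pk u == Some v)) c u * mono_eval x (u - v)%MM.
have Hid : forall N, trunc_sum x Gamma c d N =
    \sum_(v : 'X_{1..r < d.+1} | mdeg v == d) mono_eval x v * t v N.
  move=> N; rewrite /trunc_sum.
  rewrite (eq_bigr (fun u : 'X_{1..r < N} => \sum_(v : 'X_{1..r < d.+1} | pk u == Some v)
                        mono_eval x v * (c u * mono_eval x (u - v)%MM))); last first.
    move=> u Qu; have [w Hw] := pkS u Qu; rewrite Hw.
    rewrite (eq_bigl (fun v => v == w)); last by move=> v; rewrite eq_sym.
    rewrite big_pred1_eq; have [_ Hwu] := pkP _ _ Hw.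
    have E : mono_eval x u = mono_eval x (u - w)%MM * mono_eval x w by rewrite -mono_evalD submK.
    by rewrite E; ring.
  rewrite (exchange_big_dep (fun v : 'X_{1..r < d.+1} => mdeg v == d)) /=; last first.
    by move=> u v _ /eqP /pkP [-> _].
  by apply: eq_bigr => v _; rewrite /t mulr_sumr.
have Hcau : forall v : 'X_{1..r < d.+1}, mdeg v = d -> nadic_cauchy (t v).
  move=> v Hv k; exists (k + d)%N => m le.
  rewrite /t (bsum_split (fun u => Q u && (pk u == Some v)) (fun u => c u * mono_eval x (u - v)%MM) le) addrC addKr.
  apply: ip_sum => u /andP [/andP [Qu /eqP Hpk] le2]; apply: ipM; apply: HIP.
  have [Hw Hwu] := pkP _ _ Hpk.
  apply: (@ip_le _ _ k (mdeg (u - v)%MM)); last exact: ip_mono_eval.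
  rewrite mdeg_sub // Hw; lia.
have Hfin : forall s : seq 'X_{1..r < d.+1}, exists L,
    nadic_lim (fun N => \sum_(v <- s | mdeg v == d) mono_eval x v * t v N) L /\
    ideal_pow (Ix x) d L.
  elim=> [|v s [L [HL HLd]]].
    exists 0; split; last exact: ip0.
    by move=> k; exists 0%N => m _; rewrite big_nil subr0; apply: ip0.
  case Hv: (mdeg v == d).
    have [l Hl] := Hcom _ (Hcau v (eqP Hv)).
    exists (mono_eval x v * l + L); split.
      apply: (@lim_eqfun _ _ (fun N => mono_eval x v * t v N + \sum_(v <- s | mdeg v == d) mono_eval x v * t v N)).
        by move=> N; rewrite big_cons Hv.
      by apply: lim_add => //; apply: lim_scale.
    apply: ipD => //; rewrite mulrC; apply: ipM; have := ip_mono_eval v; by rewrite (eqP Hv).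
  exists L; split => //. apply: (lim_eqfun _ HL) => N. by rewrite big_cons Hv.
have [L [HL HLd]] := Hfin (index_enum _).
have -> : g = L; last by [].
apply: (lim_unique Hsep Hlim); apply: (lim_eqfun _ HL) => N; exact: Hid.
Qed.

End Trunc.

Section Main.
Variable S : comUnitRingType.
Variable r : nat.
Variable x : 'I_r -> S.
Variable Gamma : 'X_{1..r} -> bool.

Definition inr (j : option nat) i (u : 'X_{1..r}) : bool :=
  (i <= mdeg u)%N && (if j is Some j' then (mdeg u < j')%N else true).

Definition Rel (j : option nat) (c : 'X_{1..r} -> S) i f : Prop :=
  match j with
  | Some j' => ideal_pow (Ix x) j' (f - trunc_sum x Gamma c i j')
  | None => nadic_lim (fun N => trunc_sum x Gamma c i N) f
  end.

Definition Vc sigma j i (c : 'X_{1..r} -> S) : Prop :=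
  forall u, Gamma u -> inr j i u -> in_image sigma (c u).

Definition EE i j : Prop :=
  forall sigma, lifting x sigma -> forall f, ideal_pow (Ix x) i f ->
  (exists c, Vc sigma j i c /\ Rel j c i f) /\
  (forall c c', Vc sigma j i c -> Rel j c i f -> Vc sigma j i c' -> Rel j c' i f ->
     forall u, Gamma u -> inr j i u -> c u = c' u).

Lemma EE_iff i j : expandable x Gamma i j <-> EE i j.
Proof.
case: j => [j|]; first by split; exact.
have E : forall u, inr None i u = (i <= mdeg u)%N by move=> u; rewrite /inr andbT.
split=> H sigma Hs f Hf; have [[c [V R]] U] := H sigma Hs f Hf; split.
- by exists c; split => // u G; rewrite E; apply: V.
- move=> c1 c2 V1 R1 V2 R2 u G; rewrite E; apply: U => // v G'; rewrite -E; [apply: V1|apply: V2] => //.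
- by exists c; split => // u G; rewrite -E; apply: V.
- move=> c1 c2 V1 R1 V2 R2 u G; rewrite -E; apply: U => // v G'; rewrite E; [apply: V1|apply: V2] => //.
Qed.

Definition le_opt i (j : option nat) := if j is Some j' then (i <= j')%N else true.

Lemma Rel_shift j c i1 i2 f : (i1 <= i2)%N -> le_opt i2 j ->
  Rel j c i1 f <-> Rel j c i2 (f - trunc_sum x Gamma c i1 i2).
Proof.
case: j => [j|] /= le1 le2.
  by rewrite (trunc_split _ _ _ le1 le2) opprD addrA.
split; apply: (lim_ext (N0 := i2)) => m hm; rewrite (trunc_split _ _ _ le1 hm); ring.
Qed.

Lemma Rel_ip j c i2 g : (match j with Some j' => is_true (i2 <= j')%N | None => complete S end) ->
  Rel j c i2 g -> ideal_pow (Ix x) i2 g.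
Proof.
case: j => [j|] /= Hj H.
  have -> : g = (g - trunc_sum x Gamma c i2 j) + trunc_sum x Gamma c i2 j by rewrite subrK.
  by apply: ipD; [apply: ip_le Hj H | apply: ip_trunc].
exact: trunc_closed Hj H.
Qed.

Lemma Rel_eq j c c' i f : (forall u, Gamma u -> inr j i u -> c u = c' u) ->
  Rel j c i f -> Rel j c' i f.
Proof.
case: j => [j|] /= H.
  rewrite (@trunc_eq _ _ _ _ c c') // => u G h1 h2; apply: H => //; by rewrite /inr h1 h2.
move=> R; apply: (lim_eqfun _ R) => N; apply: trunc_eq => u G h1 h2; apply/esym/H => //; by rewrite /inr h1.
Qed.

Definition comb i2 (a b : 'X_{1..r} -> S) u := if (mdeg u < i2)%N then a u else b u.

Lemma lifting0 sigma : lifting x sigma -> in_image sigma 0.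
Proof. by case=> H0 _ _; exists 0; rewrite H0. Qed.

Section Fixed.
Variables (i1 i2 : nat) (j : option nat).
Hypothesis lt12 : (i1 < i2)%N.
Hypothesis Hj : match j with Some j' => is_true (i2 < j')%N | None => complete S end.

Lemma Hj' : match j with Some j' => is_true (i2 <= j')%N | None => complete S end.
Proof. by case: j Hj => // j' /ltnW. Qed.

Lemma Hle : le_opt i2 j.
Proof. by case: j Hj => //= j' /ltnW. Qed.

Lemma inr_a u : inr j i2 u -> inr j i1 u.
Proof. rewrite /inr => /andP [h1 h2]; rewrite h2 andbT; lia. Qed.

Lemma inr_b u : inr (Some i2) i1 u -> inr j i1 u.
Proof.
rewrite /inr => /andP [h1 h2]; rewrite h1 /=; case: j Hj => // j' H; lia.
Qed.

Lemma inr_c u : inr j i1 u -> (mdeg u < i2)%N -> inr (Some i2) i1 u.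
Proof. by rewrite /inr => /andP [h1 _] ->; rewrite h1. Qed.

Lemma inr_d u : inr j i1 u -> ~~ (mdeg u < i2)%N -> inr j i2 u.
Proof. rewrite /inr -leqNgt => /andP [_ ->] ->; by []. Qed.

Lemma Vc_comb sigma a b : Vc sigma (Some i2) i1 a -> Vc sigma j i2 b ->
  Vc sigma j i1 (comb i2 a b).
Proof.
move=> Va Vb u G Hu; rewrite /comb; case: ifP => h.
  by apply: Va => //; apply: inr_c.
by apply: Vb => //; apply: inr_d => //; rewrite h.
Qed.

Lemma Rel_comb a b f : Rel j b i2 (f - trunc_sum x Gamma a i1 i2) -> Rel j (comb i2 a b) i1 f.
Proof.
move=> H; apply/(Rel_shift _ _ (ltnW lt12) Hle).
rewrite (@trunc_eq _ _ _ _ (comb i2 a b) a); last first.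
  by move=> u _ _ h; rewrite /comb h.
apply: Rel_eq H => u _ Hu; rewrite /comb ifF //.
by move: Hu; rewrite /inr => /andP [h _]; apply/negbTE; rewrite -leqNgt.
Qed.

Lemma main3 :
  [/\ EE i1 (Some i2) -> EE i1 j -> EE i2 j,
      EE i1 (Some i2) -> EE i2 j -> EE i1 j &
      EE i1 j -> EE i2 j -> EE i1 (Some i2)].
Proof.
have Rel2 : forall c f, Rel j c i1 f -> Rel (Some i2) c i1 f.
  by move=> c f R; apply: (Rel_ip Hj'); apply/(Rel_shift _ _ (ltnW lt12) Hle).
have Vres : forall sigma c, Vc sigma j i1 c -> Vc sigma (Some i2) i1 c.
  by move=> sigma c V u G Hu; apply: V => //; apply: inr_b.
have Vres2 : forall sigma c, Vc sigma j i1 c -> Vc sigma j i2 c.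
  by move=> sigma c V u G Hu; apply: V => //; apply: inr_a.
split.
- move=> E1 E2 sigma Hs f Hf.
  have Hf1 : ideal_pow (Ix x) i1 f by apply: ip_le (ltnW lt12) Hf.
  have [[c [Vc1 Rc]] U2] := E2 sigma Hs f Hf1.
  have c0 : forall u, Gamma u -> inr (Some i2) i1 u -> c u = 0.
    have [_ U1] := E1 sigma Hs f Hf1.
    move=> u G Hu; apply: (U1 c (fun _ => 0)) => //.
    + by apply: Vres.
    + by apply: Rel2.
    + by move=> v _ _; apply: lifting0.
    + by rewrite /Rel trunc_zero // subr0.
  split.
    exists c; split; first exact: Vres2.
    have := (Rel_shift _ _ (ltnW lt12) Hle).1 Rc.
    rewrite trunc_zero ?subr0 // => u G h1 h2; apply: c0 => //; by rewrite /inr h1 h2.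
  have key : forall c', Vc sigma j i2 c' -> Rel j c' i2 f ->
      Vc sigma j i1 (comb i2 (fun _ => 0) c') /\ Rel j (comb i2 (fun _ => 0) c') i1 f.
    move=> c' V R; split.
      by apply: Vc_comb => // v _ _; apply: lifting0.
    by apply: Rel_comb; rewrite trunc_zero ?subr0.
  move=> c1 c2 V1 R1 V2 R2 u G Hu.
  have [V1' R1'] := key c1 V1 R1; have [V2' R2'] := key c2 V2 R2.
  have := U2 _ _ V1' R1' V2' R2' u G (inr_a Hu).
  have h : (mdeg u < i2)%N = false.
    by move: Hu; rewrite /inr => /andP [h _]; apply/negbTE; rewrite -leqNgt.
  by rewrite /comb h.
- move=> E1 E3 sigma Hs f Hf.
  have [[a [Va Ra]] U1] := E1 sigma Hs f Hf.
  have [[b [Vb Rb]] _] := E3 sigma Hs _ Ra.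
  split.
    by exists (comb i2 a b); split; [apply: Vc_comb | apply: Rel_comb].
  move=> c c' V R V' R' u G Hu.
  have eq1 := U1 c c' (Vres _ _ V) (Rel2 _ _ R) (Vres _ _ V') (Rel2 _ _ R').
  case: (boolP (mdeg u < i2)%N) => h.
    by apply: eq1 => //; apply: inr_c.
  have Hg := Rel2 _ _ R.
  have [_ U3] := E3 sigma Hs _ Hg.
  apply: (U3 c c') => //.
  + exact: Vres2.
  + exact: (Rel_shift _ _ (ltnW lt12) Hle).1 R.
  + exact: Vres2.
  + have := (Rel_shift _ _ (ltnW lt12) Hle).1 R'.
    rewrite (@trunc_eq _ _ _ _ c' c) // => v G' h1 h2; apply/esym/eq1 => //; by rewrite /inr h1 h2.
  + exact: inr_d.
- move=> E2 E3 sigma Hs f Hf.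
  have [[c [Vc1 Rc]] U2] := E2 sigma Hs f Hf.
  split.
    by exists c; split; [apply: Vres | apply: Rel2].
  have ext : forall a, Vc sigma (Some i2) i1 a -> Rel (Some i2) a i1 f ->
      exists b, Vc sigma j i1 (comb i2 a b) /\ Rel j (comb i2 a b) i1 f.
    move=> a0 V0 R0; have [[b [Vb Rb]] _] := E3 sigma Hs _ R0.
    by exists b; split; [apply: Vc_comb | apply: Rel_comb].
  move=> a a' Va Ra Va' Ra' u G Hu.
  have [b [V1 R1]] := ext a Va Ra; have [b' [V2 R2]] := ext a' Va' Ra'.
  have := U2 _ _ V1 R1 V2 R2 u G (inr_b Hu).
  by move: Hu; rewrite /comb /inr => /andP [_ ->].
Qed.

End Fixed.
End Main.

Theorem lemma3p7 (S : comUnitRingType) (r : nat) (x : 'I_r -> S)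
  (Gamma : 'X_{1..r} -> bool) (i1 i2 : nat) (i3 : option nat) :
  noetherian S -> local_ring S ->
  (0 < i1)%N -> (i1 < i2)%N ->
  match i3 with Some j => is_true (i2 < j)%N | None => complete S end ->
  let E1 := expandable x Gamma i1 (Some i2) in
  let E2 := expandable x Gamma i1 i3 in
  let E3 := expandable x Gamma i2 i3 in
  [/\ E1 -> E2 -> E3, E1 -> E3 -> E2 & E2 -> E3 -> E1].
Proof.
move=> _ _ _ lt Hj E1 E2 E3; rewrite /E1 /E2 /E3.
have [A B C] := main3 x Gamma lt Hj.
split; move=> H1 H2; apply/EE_iff.
- by apply: A; apply/EE_iff.
- by apply: B; apply/EE_iff.
- by apply: C; apply/EE_iff.
Qed.
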